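(* Let $M$ be a minimal dominating set of a finite tree $T$. Then $$|N_1(M)|-\rho_1(M)+|N_2(M)|-\rho_2(M)\le 2(\Gamma(T)-|M|).$$
   Context: A dominating set of a graph $G=(V,E)$ is a set $S\subseteq V$ such that every vertex is in $S$ or adjacent to a vertex of $S$; it is minimal if no proper subset is dominating. $\Gamma(T)$ is the maximum size of a minimal dominating set of $T$. $N[u]=N(u)\cup\{u\}$. For a dominating set $S$: $a(S)=\{u\in S: S\setminus\{u\}\text{ is not dominating}\}$; $N_1(S)=\{u\in V\setminus S: |N[u]\cap S|=1\}$; $N_2(S)=\{u\in V\setminus S: |N[u]\cap S|\ge 2\}$; $a_1(S)=\{u\in a(S): N[u]\cap N_1(S)\ne\emptyset\}$; $a_2(S)=\{u\in a(S): N[u]\cap N_1(S)=\emptyset\}$. $\rho_1(M)$ is the maximum size of a matching, using edges of $T$, between $N_1(M)$ and $a_1(M)$ (each edge joining a vertex of $N_1(M)$ to a vertex of $a_1(M)$); $\rho_2(M)$ is the maximum size of such a matching between $N_2(M)$ and $a_2(M)$. *)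

(* Defs.v *)
(* A finite simple graph is a symmetric irreflexive
   relation e on a finType T. *)
From mathcomp Require Import all_boot all_order all_algebra.
Set Implicit Arguments. Unset Strict Implicit. Unset Printing Implicit Defensive.

Section Domination.
Variables (T : finType) (e : rel T).

Definition is_cycle (c : seq T) : bool := [&& 2 < size c, uniq c & cycle e c].
Definition acyclic : Prop := forall c : seq T, ~~ is_cycle c.
Definition connected : Prop := forall x y : T, connect e x y.
Definition is_tree : Prop := [/\ symmetric e, irreflexive e, connected & acyclic].

Definition cnbhd (u : T) : {set T} := [set v | e u v] :|: [set u].

Definition dominating (S : {set T}) : bool :=
  [forall v, cnbhd v :&: S != set0].

Definition minimal_dominating (S : {set T}) : bool :=
  dominating S && [forall S' : {set T}, (S' \proper S) ==> ~~ dominating S'].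

Definition upper_domination : nat :=
  \max_(S : {set T} | minimal_dominating S) #|S|.

Definition a_set (S : {set T}) : {set T} := [set u in S | ~~ dominating (S :\ u)].
Definition N1 (S : {set T}) : {set T} := [set u in ~: S | #|cnbhd u :&: S| == 1].
Definition N2 (S : {set T}) : {set T} := [set u in ~: S | 2 <= #|cnbhd u :&: S|].
Definition a1 (S : {set T}) : {set T} :=
  [set u in a_set S | cnbhd u :&: N1 S != set0].
Definition a2 (S : {set T}) : {set T} :=
  [set u in a_set S | cnbhd u :&: N1 S == set0].

Definition matching_between (A B : {set T}) (Mt : {set T * T}) : bool :=
  [forall p in Mt, [&& p.1 \in A, p.2 \in B & e p.1 p.2]] &&
  [forall p in Mt, forall q in Mt,
     (p != q) ==> ((p.1 != q.1) && (p.2 != q.2))].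

Definition max_matching (A B : {set T}) : nat :=
  \max_(Mt : {set T * T} | matching_between A B Mt) #|Mt|.

Definition rho1 (S : {set T}) : nat := max_matching (N1 S) (a1 S).
Definition rho2 (S : {set T}) : nat := max_matching (N2 S) (a2 S).

End Domination.

(* Main.v *)
Require Import Defs.
From mathcomp Require Import all_boot all_order all_algebra.
From mathcomp Require Import zify.
Set Implicit Arguments. Unset Strict Implicit. Unset Printing Implicit Defensive.

Section Helpers.
Variables (T : finType) (e : rel T).
Hypothesis esym : symmetric e.
Hypothesis eirr : irreflexive e.

Lemma cyc_from s1 y t : sorted e (s1 ++ y :: t) -> uniq (s1 ++ y :: t) ->
  e (last y t) y -> 1 < size t -> is_cycle e (y :: t).
Proof.
move=> Hs Hu He Ht; rewrite /is_cycle; apply/and3P; split.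
- by rewrite /= ltnS.
- by rewrite cat_uniq in Hu; case/and3P: Hu.
- rewrite /= rcons_path He andbT.
  by have := (cat_sorted2 Hs).2.
Qed.

Lemma no_min_deg (S : {set T}) x0 : acyclic e -> x0 \in S ->
  (forall x, x \in S -> 1 < #|[set y in S | e x y]|) -> False.
Proof.
move=> Hac x0S Hdeg.
have ext : forall k, exists s, [/\ size s = k.+1, uniq s, sorted e s & {subset s <= S}].
  elim=> [|k [s [Hsz Hu Hso HS]]].
    by exists [:: x0]; split => // y; rewrite inE => /eqP ->.
  case: s Hsz Hu Hso HS => [//|x p] Hsz Hu Hso HS.
  set z := last x p.
  have zS : z \in S by apply: HS; exact: mem_last.
  have := Hdeg z zS.
  set Nz := [set y in S | e z y] => HNz.
  have [y1 y1N] : exists y1, y1 \in Nz by apply/card_gt0P; lia.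
  have [y2 y2N] : exists y2, y2 \in Nz :\ y1.
    by apply/card_gt0P; move: HNz; rewrite (cardsD1 y1) y1N; lia.
  move: y2N; rewrite !inE => /and3P [y21 y2S ezy2].
  move: y1N; rewrite !inE => /andP [y1S ezy1].
  have extend : forall y, y \in S -> e z y -> y \notin x :: p ->
      exists s, [/\ size s = k.+2, uniq s, sorted e s & {subset s <= S}].
    move=> y yS ezy yn; exists (x :: rcons p y); split.
    - by rewrite /= size_rcons; move: Hsz => /= ->.
    - by rewrite -rcons_cons rcons_uniq yn Hu.
    - by rewrite /= rcons_path; move: Hso => /= ->.
    - by move=> w; rewrite -rcons_cons mem_rcons inE => /orP [/eqP -> //|]; apply: HS.
  case: (boolP (y1 \in x :: p)) => [y1in|]; last exact: extend.
  case: (boolP (y2 \in x :: p)) => [y2in|]; last exact: extend.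
  exfalso.
  have [s1 [t1 E1]] : exists s1 t1, x :: p = s1 ++ y1 :: t1.
    by case/splitPr: y1in => s1 t1; exists s1, t1.
  have [s2 [t2 E2]] : exists s2 t2, x :: p = s2 ++ y2 :: t2.
    by case/splitPr: y2in => s2 t2; exists s2, t2.
  have L1 : z = last y1 t1 by rewrite /z -[last x p]/(last x (x :: p)) E1 last_cat.
  have L2 : z = last y2 t2 by rewrite /z -[last x p]/(last x (x :: p)) E2 last_cat.
  case: t1 E1 L1 => [|w1 [|w1' t1]] E1 L1.
  - by move: ezy1; rewrite L1 /= eirr.
  - case: t2 E2 L2 => [|w2 [|w2' t2]] E2 L2.
    + by move: ezy2; rewrite L2 /= eirr.
    + have : rcons (rcons s1 y1) w1 = rcons (rcons s2 y2) w2.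
        by rewrite -!cats1 -!catA /= -E1 -E2.
      case/rcons_inj => /rcons_inj [_ Hy] _.
      by move: y21; rewrite Hy eqxx.
    + apply: (negP (Hac (y2 :: [:: w2, w2' & t2]))).
      apply: (@cyc_from s2); rewrite -?E2 // -?L2 //.
  - apply: (negP (Hac (y1 :: [:: w1, w1' & t1]))).
    apply: (@cyc_from s1); rewrite -?E1 // -?L1 //.
have [s [Hsz Hu _ _]] := ext #|T|.
have := max_card (mem s).
by rewrite (card_uniqP Hu) Hsz ltnn.
Qed.

Lemma forest (S : {set T}) : acyclic e -> exists (I C : {set T}) (f : T -> T),
  [/\ I \subset S, C \subset S, (forall x y, x \in I -> y \in I -> ~~ e x y),
   (forall x, x \in C -> [/\ f x \in C, f (f x) = x & e x (f x)]) &
   2 * #|S| <= 2 * #|I| + #|C|].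
Proof.
move=> Hac.
elim: {S}_.+1 {-2}S (ltnSn #|S|) => // n IH S HS.
case: (boolP [exists x in S, #|[set y in S | e x y]| <= 1]).
  case/exists_inP => x xS Hx.
  have HSx : #|S| = (#|S :\ x|).+1 by rewrite (cardsD1 x S) xS.
  case: (posnP #|[set y in S | e x y]|) => [H0|H1].
    have Hno : forall y, y \in S -> ~~ e x y.
      move=> y yS; apply/negP => exy.
      have : y \in [set y in S | e x y] by rewrite inE yS exy.
      by rewrite (cards0_eq H0) inE.
    have [I [C [f [HI HC Hind Hf Hcard]]]] : exists (I C : {set T}) (f : T -> T),
      [/\ I \subset S :\ x, C \subset S :\ x, (forall x y, x \in I -> y \in I -> ~~ e x y),
       (forall x, x \in C -> [/\ f x \in C, f (f x) = x & e x (f x)]) &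
       2 * #|S :\ x| <= 2 * #|I| + #|C|].
      by apply: IH; lia.
    have xI : x \notin I by apply/negP => /(subsetP HI); rewrite !inE eqxx.
    exists (x |: I), C, f; split => //.
    - apply/subsetP => y; rewrite !inE => /orP [/eqP -> //|/(subsetP HI)].
      by rewrite !inE => /andP [].
    - by apply: (subset_trans HC); apply/subsetP => y; rewrite !inE => /andP [].
    - move=> a b; rewrite !inE => /orP [/eqP ->|aI] /orP [/eqP ->|bI].
      + by rewrite eirr.
      + by apply: Hno; move/(subsetP HI): bI; rewrite !inE => /andP [].
      + by rewrite esym; apply: Hno; move/(subsetP HI): aI; rewrite !inE => /andP [].
      + exact: Hind.
    - by rewrite cardsU1 xI; lia.
  have /cards1P [p Hp] : #|[set y in S | e x y]| == 1 by apply/eqP; lia.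
  have : p \in [set y in S | e x y] by rewrite Hp inE.
  rewrite inE => /andP [pS exp].
  have Honly : forall y, y \in S -> e x y -> y = p.
    move=> y yS exy.
    have : y \in [set y in S | e x y] by rewrite inE yS exy.
    by rewrite Hp inE => /eqP.
  have px : p != x by apply/eqP => pxE; move: exp; rewrite pxE eirr.
  have HSxp : #|S :\ x| = (#|S :\ x :\ p|).+1 by rewrite (cardsD1 p (S :\ x)) !inE px pS.
  have [I [C [f [HI HC Hind Hf Hcard]]]] : exists (I C : {set T}) (f : T -> T),
    [/\ I \subset S :\ x :\ p, C \subset S :\ x :\ p, (forall x y, x \in I -> y \in I -> ~~ e x y),
     (forall x, x \in C -> [/\ f x \in C, f (f x) = x & e x (f x)]) &
     2 * #|S :\ x :\ p| <= 2 * #|I| + #|C|].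
    by apply: IH; lia.
  have inS' : forall (A : {set T}) y, A \subset S :\ x :\ p -> y \in A -> [/\ y != p, y != x & y \in S].
    by move=> A y HA /(subsetP HA); rewrite !inE => /and3P [].
  have xI : x \notin I by apply/negP => /(inS' _ _ HI) []; rewrite eqxx.
  have xC : x \notin C by apply/negP => /(inS' _ _ HC) []; rewrite eqxx.
  have pC : p \notin C by apply/negP => /(inS' _ _ HC) []; rewrite eqxx.
  pose g := fun y => if y == x then p else if y == p then x else f y.
  exists (x |: I), (x |: (p |: C)), g; split.
  - apply/subsetP => y; rewrite !inE => /orP [/eqP -> //|/(inS' _ _ HI) []] //.
  - apply/subsetP => y; rewrite !inE => /or3P [/eqP -> //|/eqP -> //|/(inS' _ _ HC) []] //.
  - move=> a b; rewrite !inE => /orP [/eqP ->|aI] /orP [/eqP ->|bI].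
    + by rewrite eirr.
    + case/(inS' _ _ HI): bI => bp _ bS; apply/negP => exb.
      by move: bp; rewrite (Honly b bS exb) eqxx.
    + case/(inS' _ _ HI): aI => ap _ aS; apply/negP; rewrite esym => exa.
      by move: ap; rewrite (Honly a aS exa) eqxx.
    + exact: Hind.
  - move=> y; rewrite !inE => /or3P [/eqP ->|/eqP ->|yC].
    + by split; rewrite /g ?eqxx ?(negbTE px) ?eqxx ?inE ?eqxx ?orbT.
    + by split; rewrite /g ?eqxx ?(negbTE px) ?eqxx ?inE ?eqxx ?orbT // esym.
    + have [yp yx _] := inS' _ _ HC yC.
      have [fyC ffy eyf] := Hf y yC.
      have [fyp fyx _] := inS' _ _ HC fyC.
      by rewrite /g (negbTE yp) (negbTE yx) (negbTE fyp) (negbTE fyx) ffy fyC !orbT.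
  - rewrite cardsU1 xI cardsU1 !inE negb_or eq_sym px xC cardsU1 pC /=; lia.
rewrite negb_exists => /forallP Hall.
case: (set_0Vmem S) => [->|[x0 x0S]].
  by exists set0, set0, id; split; rewrite ?sub0set ?cards0 // => x; rewrite inE.
exfalso; apply: (no_min_deg Hac x0S) => x xS.
by move: (Hall x); rewrite xS /= -ltnNge.
Qed.

Lemma in_cnbhd u v : (v \in cnbhd e u) = (e u v) || (v == u).
Proof. by rewrite /cnbhd !inE. Qed.

Lemma indep_le_Gamma (I : {set T}) :
  (forall x y, x \in I -> y \in I -> ~~ e x y) -> #|I| <= upper_domination e.
Proof.
move=> Hind.
pose P := fun J : {set T} => (I \subset J) && [forall x in J, forall y in J, ~~ e x y].
have PI : P I.
  rewrite /P subxx /=; apply/forall_inP => x xI; apply/forall_inP => y yI; exact: Hind.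
case: (@arg_maxnP _ I P (fun J : {set T} => #|J|) PI) => J /andP [IJ /forall_inP HJ] Hmax.
have HJ' : forall x y, x \in J -> y \in J -> ~~ e x y by move=> x y /HJ /forall_inP H /H.
have Jmin : minimal_dominating e J.
  apply/andP; split.
    apply/forallP => v; apply/negP => /eqP Hv.
    have vJ : v \notin J.
      apply/negP => vJ.
      have : v \in cnbhd e v :&: J by rewrite inE in_cnbhd eqxx orbT vJ.
      by rewrite Hv inE.
    have : P (v |: J).
      rewrite /P (subset_trans IJ (subsetUr _ _)) /=.
      apply/forall_inP => x; rewrite !inE => /orP [/eqP ->|xJ]; apply/forall_inP => y;
        rewrite !inE => /orP [/eqP ->|yJ].
      - by rewrite eirr.
      - apply/negP => evy.
        have : y \in cnbhd e v :&: J by rewrite inE in_cnbhd evy yJ.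
        by rewrite Hv inE.
      - apply/negP => evy.
        have : x \in cnbhd e v :&: J by rewrite inE in_cnbhd esym evy xJ.
        by rewrite Hv inE.
      - exact: HJ'.
    by move/Hmax; rewrite cardsU1 vJ /= ltnn.
  apply/forallP => S'; apply/implyP => /properP [S'J [u uJ uS']].
  apply/negP => /forallP /(_ u) /set0Pn [w]; rewrite inE in_cnbhd => /andP [/orP [euw|/eqP ->] wS'].
    by move: (HJ' u w uJ (subsetP S'J w wS')); rewrite euw.
  by move: uS'; rewrite wS'.
apply: (leq_trans (subset_leq_card IJ)).
rewrite /upper_domination; exact: (@leq_bigmax_cond _ (minimal_dominating e) (fun S : {set T} => #|S|) J Jmin).
Qed.

Variable M : {set T}.
Hypothesis HM : minimal_dominating e M.

Lemma Mdom : dominating e M.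
Proof. by case/andP: HM. Qed.

Lemma M_sub_a : M \subset a_set e M.
Proof.
apply/subsetP => u uM; rewrite /a_set inE uM /=.
case/andP: HM => _ /forallP /(_ (M :\ u)) /implyP; apply; exact: properD1.
Qed.

Lemma a2_noM u w : u \in a2 e M -> e u w -> w \notin M.
Proof.
rewrite /a2 /a_set /dominating !inE => /andP [/andP [uM /forallPn [v]]].
rewrite negbK => /eqP Hv /eqP HN1 euw.
have Hdom := Mdom; move/forallP: Hdom => /(_ v) /set0Pn [z]; rewrite inE => /andP [zc zM].
have zu : z = u.
  case: (eqVneq z u) => // zu; exfalso.
  have : z \in cnbhd e v :&: (M :\ u) by rewrite in_setI zc in_setD1 zu zM.
  by rewrite Hv inE.
subst z.
have Honly : forall y, y \in cnbhd e v -> y \in M -> y = u.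
  move=> y yc yM; case: (eqVneq y u) => // yu; exfalso.
  have : y \in cnbhd e v :&: (M :\ u) by rewrite in_setI yc in_setD1 yu yM.
  by rewrite Hv inE.
case: (eqVneq v u) => [vu|vu].
  subst v; apply/negP => wM.
  have := Honly w; rewrite in_cnbhd euw => /(_ isT wM) wu.
  by move: euw; rewrite wu eirr.
have vM : v \notin M.
  by apply/negP => vM; move: vu; rewrite (Honly v _ vM) ?eqxx // in_cnbhd eqxx orbT.
have vN1 : v \in N1 e M.
  rewrite /N1 !inE vM /=; apply/cards1P; exists u; apply/setP => y; rewrite in_setI in_set1.
  apply/andP/eqP => [[yc yM]|->]; first exact: Honly.
  by rewrite zc.
have : v \in cnbhd e u :&: N1 e M.
  rewrite inE vN1 andbT in_cnbhd.
  by move: zc; rewrite in_cnbhd eq_sym (negbTE vu) !orbF esym.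
by rewrite HN1 inE.
Qed.

Lemma a2_nbr u w : u \in a2 e M -> e u w -> w \in N2 e M.
Proof.
move=> ua2 euw; have wM := a2_noM ua2 euw.
move: ua2; rewrite /a2 /a_set !inE => /andP [/andP [uM _] /eqP HN1].
rewrite wM /=.
have wN1 : w \notin N1 e M.
  apply/negP => wN1.
  have : w \in cnbhd e u :&: N1 e M by rewrite inE wN1 andbT in_cnbhd euw.
  by rewrite HN1 inE.
have : u \in cnbhd e w :&: M by rewrite inE uM andbT in_cnbhd esym euw.
move=> uin; have : 0 < #|cnbhd e w :&: M| by apply/card_gt0P; exists u.
move: wN1; rewrite /N1 !inE wM /=; lia.
Qed.

Lemma card_disj (A B : {set T}) : (forall x, x \in A -> x \in B -> False) ->
  #|A :|: B| = #|A| + #|B|.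
Proof.
move=> H; rewrite -cardsUI.
have -> : A :&: B = set0.
  by apply/setP => x; rewrite !inE; apply/negP => /andP [] /H H' /H'.
by rewrite cards0 addn0.
Qed.

Lemma card_union_le (A B : {set T}) : #|A :|: B| <= #|A| + #|B|.
Proof. by rewrite -cardsUI leq_addr. Qed.

Lemma a_subM u : u \in a_set e M -> u \in M.
Proof. by rewrite /a_set inE => /andP []. Qed.

Lemma N1_notM w : w \in N1 e M -> w \notin M.
Proof. by rewrite /N1 !inE => /andP []. Qed.

Lemma N2_notM w : w \in N2 e M -> w \notin M.
Proof. by rewrite /N2 !inE => /andP []. Qed.

Lemma rho1_ge : #|a1 e M| <= rho1 e M.
Proof.
pose g u := odflt u [pick v in cnbhd e u :&: N1 e M].
have Hg : forall u, u \in a1 e M -> g u \in cnbhd e u :&: N1 e M.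
  move=> u; rewrite /a1 inE => /andP [_ /set0Pn [v vin]].
  rewrite /g; case: pickP => [w //|/(_ v)]; rewrite vin //.
have HuM : forall u, u \in a1 e M -> u \in M.
  by move=> u; rewrite /a1 inE => /andP [/a_subM].
have Heg : forall u, u \in a1 e M -> e (g u) u.
  move=> u ua1; have /setIP [gc gN1] := Hg u ua1.
  move: gc; rewrite in_cnbhd => /orP [|/eqP gu]; first by rewrite esym.
  by move: (N1_notM gN1); rewrite gu HuM.
pose Mt := [set (g u, u) | u in a1 e M].
have cMt : #|Mt| = #|a1 e M| by apply: card_imset => u v [] _.
have HMt : matching_between e (N1 e M) (a1 e M) Mt.
  apply/andP; split.
    apply/forall_inP => p /imsetP [u ua1 ->] /=.
    have /setIP [_ gN1] := Hg u ua1.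
    by rewrite gN1 ua1 Heg.
  apply/forall_inP => p /imsetP [u ua1 ->]; apply/forall_inP => q /imsetP [v va1 ->].
  apply/implyP => neq /=.
  have uv : u != v by apply/negP => /eqP uv; move: neq; rewrite uv eqxx.
  rewrite uv andbT; apply/negP => /eqP guv.
  have /setIP [_ gN1] := Hg u ua1.
  move: gN1; rewrite /N1 inE => /andP [_ /cards1P [z Hz]].
  have : u \in cnbhd e (g u) :&: M by rewrite in_setI in_cnbhd Heg // HuM.
  have : v \in cnbhd e (g u) :&: M by rewrite in_setI in_cnbhd guv Heg // HuM.
  rewrite Hz !inE => /eqP vz /eqP uz.
  by move: uv; rewrite vz uz eqxx.
rewrite -cMt /rho1 /max_matching.
exact: (@leq_bigmax_cond _ (matching_between e (N1 e M) (a1 e M)) (fun S : {set T * T} => #|S|) Mt HMt).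
Qed.

Lemma card_partition : #|M| + #|N1 e M| + #|N2 e M| <= #|T|.
Proof.
rewrite -card_disj; last by move=> x xM /N1_notM; rewrite xM.
rewrite -card_disj; first exact: max_card.
move=> x; rewrite inE => /orP [xM /N2_notM|]; first by rewrite xM.
rewrite /N1 /N2 !inE => /andP [_ /eqP ->] /andP [_].
by [].
Qed.
End Helpers.

Unset Implicit Arguments.
Import GRing.Theory Num.Theory.
Local Open Scope ring_scope.

Theorem theorem4p8 (T : finType) (e : rel T) (M : {set T}) :
  is_tree e -> minimal_dominating e M ->
  (#|N1 e M|%:Z - (rho1 e M)%:Z + #|N2 e M|%:Z - (rho2 e M)%:Z
     <= 2 * ((upper_domination e)%:Z - #|M|%:Z))%R.
Proof.
case=> esym eirr _ Hac HM.
have [I [C [f [_ _ Hind Hf Hcard]]]] := forest esym eirr [set: T] Hac.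
rewrite cardsT in Hcard.
have F1 := rho1_ge esym M.
have F2 : (#|M| <= #|a1 e M| + #|a2 e M|)%N.
  apply: leq_trans (card_union_le _ _).
  apply: subset_leq_card; apply/subsetP => u uM.
  have := subsetP (M_sub_a HM) u uM => ua.
  rewrite in_setU /a1 /a2; apply/orP.
  by case: (boolP (cnbhd e u :&: N1 e M == set0)) => H; [right|left]; apply/setIdP; split.
have F3 := card_partition e M.
have F8 := indep_le_Gamma esym eirr Hind.
have F6 : (#|C| + #|a2 e M :\: C| <= #|T|)%N.
  rewrite -card_disj; first exact: max_card.
  by move=> x xC; rewrite inE xC.
have F7 := cardsID C (a2 e M).
have F5 : (#|a2 e M :&: C| <= rho2 e M)%N.
  pose Mt := [set (f u, u) | u in a2 e M :&: C].
  have cMt : #|Mt| = #|a2 e M :&: C| by apply: card_imset => u v [] _.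
  have HMt : matching_between e (N2 e M) (a2 e M) Mt.
    apply/andP; split.
      apply/forall_inP => p /imsetP [u /setIP [ua2 uC] ->] /=.
      have [_ _ euf] := Hf u uC.
      by rewrite (a2_nbr esym eirr HM ua2 euf) ua2 esym.
    apply/forall_inP => p /imsetP [u /setIP [ua2 uC] ->];
      apply/forall_inP => q /imsetP [v /setIP [va2 vC] ->].
    apply/implyP => neq /=.
    have uv : u != v by apply/negP => /eqP uv; move: neq; rewrite uv eqxx.
    rewrite uv andbT; apply/negP => /eqP fuv.
    have [_ ffu _] := Hf u uC; have [_ ffv _] := Hf v vC.
    by move: uv; rewrite -ffu fuv ffv eqxx.
  rewrite -cMt /rho2 /max_matching.
  exact: (@leq_bigmax_cond _ (matching_between e (N2 e M) (a2 e M)) (fun S : {set T * T} => #|S|) Mt HMt).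
lia.
Qed.
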